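(* Suppose that for an agent $m$ and iteration $k$, $$ \mathbb{E}_{\sigma_k}\Big((\theta_{k+1}^m-\theta_k^m)^\top\phi-\beta_k^{-1}\hat Q^{1:m}_{\boldsymbol{\pi}_{\theta_k}}\Big)^2\le(\epsilon_k^m)^2,\qquad \mathbb{E}_{\sigma_k}\Big(\hat Q^{1:m}_{\boldsymbol{\pi}_{\theta_k}}-Q^{1:m}_{\boldsymbol{\pi}_{\theta_k}}\Big)^2\le(\xi_k^m)^2, $$ where all functions are evaluated at $(s,\mathbf{a}^{1:m-1},a^m)$. Let $\pi^m_{k+1}(\cdot|s,\mathbf{a}^{1:m-1})\propto\exp\{\beta_k^{-1}Q^{1:m}_{\boldsymbol{\pi}_{\theta_k}}(s,\mathbf{a}^{1:m-1},\cdot)+\phi^\top(s,\mathbf{a}^{1:m-1},\cdot)\theta_k^m\}$. Then $$ \Big|\mathbb{E}_{s\sim\nu_*,\ \mathbf{a}^{1:m-1}\sim\boldsymbol{\pi}_*^{1:m-1}}\Big\langle\log\frac{\pi_{\theta_{k+1}^m}(\cdot|s,\mathbf{a}^{1:m-1})}{\pi^m_{k+1}(\cdot|s,\mathbf{a}^{1:m-1})},\ \pi_*^m(\cdot|s,\mathbf{a}^{1:m-1})-\pi_{\theta_k^m}(\cdot|s,\mathbf{a}^{1:m-1})\Big\rangle\Big|\le\Delta_k^m, $$ where $\Delta_k^m=\sqrt2(\phi_k^m+\phi_k^{m-1})\big(\epsilon_k^m+\frac{\xi_k^m}{\beta_k}\big)$.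
   Context: Fully cooperative Markov game with agents $\{1,\dots,N\}$, finite state space $\mathcal{S}$, finite individual action space $\mathcal{A}$. Joint policies in sequential conditional form $\boldsymbol{\pi}(\mathbf{a}|s)=\prod_m\pi^m(a^m|s,\mathbf{a}^{1:m-1})$; $\boldsymbol{\pi}^{1:m}$ is the induced law of $\mathbf{a}^{1:m}$; $Q^{1:m}_{\boldsymbol{\pi}}$ is the expected joint action-value given $\mathbf{a}^{1:m}$ when the other agents follow $\boldsymbol{\pi}$. Log-linear policies $\pi_{\theta^m}(a^m|s,\mathbf{a}^{1:m-1})\propto\exp(\phi^\top(s,\mathbf{a}^{1:m-1},a^m)\theta^m)$, $\|\phi\|_2\le1$. $\boldsymbol{\pi}_{\theta_k}$ is the current joint policy with parameters $\theta_k^1,\dots,\theta_k^N$, $\nu_k$ its stationary state distribution, $\sigma_k$ the law of $(s,\mathbf{a}^{1:m-1},a^m)$ with $s\sim\nu_k$, $\mathbf{a}^{1:m}\sim\boldsymbol{\pi}_{\theta_k}^{1:m}(\cdot|s)$. $\boldsymbol{\pi}_*$ is an optimal joint policy with stationary state distribution $\nu_*$. $\theta^m_{k+1}\in\mathbb{R}^d$, $\beta_k>0$, $\hat Q^{1:m}_{\boldsymbol{\pi}_{\theta_k}}$ is an estimator. $\langle\cdot,\cdot\rangle$ is the inner product over $\mathcal{A}$. Concentrability: $\phi_k^m=\big\|\frac{d(\nu_*\boldsymbol{\pi}_*^{1:m})}{d(\nu_k\boldsymbol{\pi}_{\theta_k}^{1:m})}\big\|_{2,\sigma_k}$ for $m\ge0$,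 with $\|f\|_{2,\rho}=(\sum\rho|f|^2)^{1/2}$. *)

(* Defs.v *)
From HB Require Import structures.
From mathcomp Require Import all_boot all_order all_algebra.
From mathcomp Require Import reals sequences exp.
Unset Printing Implicit Defensive.
Import Order.TTheory GRing.Theory Num.Theory.
Local Open Scope ring_scope.

Section MG.
Variables (R : realType) (S A : finType).

(* actprefix of actions a^{1:n} of the first n agents (0-based agents 0..n-1) *)
Definition actprefix (n : nat) := {ffun 'I_n -> A}.

Definition restr (n : nat) (a : actprefix n) (i : 'I_n) : actprefix i :=
  [ffun t : 'I_i => a (widen_ord (ltnW (ltn_ord i)) t)].

(* A joint policy in sequential conditional form:
   pol j s a^{1:j} b = pi^{j+1}(b | s, a^{1:j})   (0-based agent index j). *)
Definition seqpolicy := forall j : nat, S -> actprefix j -> A -> R.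

Definition is_policy (N : nat) (pol : seqpolicy) :=
  forall j, (j < N)%N -> forall s (x : actprefix j),
    (forall b, 0 <= pol j s x b) /\ \sum_b pol j s x b = 1.

Definition prefix_law (pol : seqpolicy) (n : nat) (s : S) (a : actprefix n) : R :=
  \prod_(i < n) pol i s (restr n a i) (a i).

Definition is_distr (nu : S -> R) :=
  (forall s, 0 <= nu s) /\ \sum_s nu s = 1.

Definition stationary (N : nat) (P : S -> actprefix N -> S -> R)
  (pol : seqpolicy) (nu : S -> R) :=
  is_distr nu /\
  forall s', nu s' = \sum_s \sum_(a : actprefix N) nu s * prefix_law pol N s a * P s a s'.

Definition dotv (d : nat) (u v : 'rV[R]_d) : R := \sum_(i < d) u 0 i * v 0 i.

Definition softmax (f : A -> R) (b : A) : R := expR (f b) / \sum_c expR (f c).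

Definition loglin (d : nat) (phi : forall j : nat, S -> actprefix j -> A -> 'rV[R]_d)
  (theta : nat -> 'rV[R]_d) : seqpolicy :=
  fun j s x b => softmax (fun c => dotv d (phi j s x c) (theta j)) b.

Definition joint_law (nu : S -> R) (pol : seqpolicy) (n : nat) (s : S) (a : actprefix n) :=
  nu s * prefix_law pol n s a.

Definition abs_cont (nu : S -> R) (pol : seqpolicy) (nu' : S -> R) (pol' : seqpolicy)
  (n : nat) :=
  forall s (a : actprefix n), joint_law nu pol n s a = 0 -> joint_law nu' pol' n s a = 0.

(* concentrability coefficient
   || d(nu' pol'^{1:n}) / d(nu pol^{1:n}) ||_{2, nu pol^{1:n}} *)
Definition conc (nu : S -> R) (pol : seqpolicy) (nu' : S -> R) (pol' : seqpolicy)
  (n : nat) : R :=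
  Num.sqrt (\sum_s \sum_(a : actprefix n)
     joint_law nu pol n s a * (joint_law nu' pol' n s a / joint_law nu pol n s a) ^+ 2).

Definition sigma_law (nu : S -> R) (pol : seqpolicy) (j : nat) (s : S) (x : actprefix j) (b : A) :=
  nu s * prefix_law pol j s x * pol j s x b.

Definition sq_err (nu : S -> R) (pol : seqpolicy) (j : nat) (f : S -> actprefix j -> A -> R) :=
  \sum_s \sum_(x : actprefix j) \sum_b sigma_law nu pol j s x b * (f s x b) ^+ 2.

End MG.

Arguments actprefix : clear implicits.
Arguments restr {A n} a i.
Arguments is_policy {R S A} N pol.
Arguments prefix_law {R S A} pol n s a.
Arguments is_distr {R S} nu.
Arguments stationary {R S A} N P pol nu.
Arguments dotv {R d} u v.
Arguments softmax {R A} f b.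
Arguments loglin {R S A d} phi theta j s x b.
Arguments joint_law {R S A} nu pol n s a.
Arguments abs_cont {R S A} nu pol nu' pol' n.
Arguments conc {R S A} nu pol nu' pol' n.
Arguments sigma_law {R S A} nu pol j s x b.
Arguments sq_err {R S A} nu pol j f.

(* Main.v *)
Require Import Defs.
From HB Require Import structures.
From mathcomp Require Import all_boot all_order all_algebra.
From mathcomp Require Import reals sequences exp.
From mathcomp Require Import ring lra.
Import Order.TTheory GRing.Theory Num.Theory.
Local Open Scope ring_scope.

Lemma amgm (R : realType) (t a b : R) : 0 < t -> 2 * a * b <= t * a ^+ 2 + b ^+ 2 / t.
Proof.
move=> t0.
rewrite -(ler_pM2r t0).
have -> : (t * a ^+ 2 + b ^+ 2 / t) * t = t^+2 * a^+2 + b^+2 by field; rewrite gt_eqF.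
have := sqr_ge0 (t * a - b). nra.
Qed.

Lemma CS (R : realType) (I : finType) (p w u : I -> R) (e : R) :
  (forall i, 0 <= p i) -> 0 <= e -> \sum_i p i * u i ^+ 2 <= e ^+ 2 ->
  `|\sum_i p i * w i * u i| <= Num.sqrt (\sum_i p i * w i ^+ 2) * e.
Proof.
move=> p0 e0 hU.
have W0 : 0 <= \sum_i p i * w i ^+ 2 by apply: sumr_ge0 => i _; rewrite mulr_ge0 ?sqr_ge0.
have U0 : 0 <= \sum_i p i * u i ^+ 2 by apply: sumr_ge0 => i _; rewrite mulr_ge0 ?sqr_ge0.
set W := \sum_i _ in W0 *.
set U := \sum_i _ in U0 hU.
have [c0|cn0] := eqVneq (Num.sqrt W) 0.
  have W00 : W = 0 by move/eqP: c0; rewrite sqrtr_eq0 => h; apply/le_anti; rewrite h W0.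
  have := W00; rewrite /W => /eqP; rewrite psumr_eq0; last by move=> i _; rewrite mulr_ge0 ?sqr_ge0.
  move/allP => hall.
  rewrite c0 mul0r big1 ?normr0 // => i _.
  have := hall i (mem_index_enum i); rewrite /= mulf_eq0 sqrf_eq0 => /orP[]/eqP h;
    by rewrite h ?mul0r ?mulr0 ?mul0r.
have [e00|en0] := eqVneq e 0.
  have U00 : U = 0 by apply/le_anti; rewrite U0 andbT; move: hU; rewrite e00 expr2 mulr0.
  have := U00; rewrite /U => /eqP; rewrite psumr_eq0; last by move=> i _; rewrite mulr_ge0 ?sqr_ge0.
  move/allP => hall.
  rewrite e00 mulr0 big1 ?normr0 // => i _.
  have := hall i (mem_index_enum i); rewrite /= mulf_eq0 sqrf_eq0 => /orP[]/eqP h;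
    by rewrite h ?mul0r ?mulr0 ?mul0r.
set c := Num.sqrt W in cn0 *.
have cpos : 0 < c by rewrite lt_def cn0 sqrtr_ge0.
have epos : 0 < e by rewrite lt_def en0 e0.
have c2 : c ^+ 2 = W by rewrite sqr_sqrtr.
set t := e / c.
have tpos : 0 < t by rewrite divr_gt0.
apply: (le_trans (ler_norm_sum _ _ _)).
apply: (@le_trans _ _ (\sum_i (t / 2 * (p i * w i ^+ 2) + 1 / (2 * t) * (p i * u i ^+ 2)))).
  apply: ler_sum => i _.
  rewrite !normrM (ger0_norm (p0 i)).
  have h := @amgm R t `|w i| `|u i| tpos.
  rewrite !real_normK ?num_real // in h.
  have pi0 := p0 i.
  have -> : t / 2 * (p i * w i ^+ 2) + 1 / (2 * t) * (p i * u i ^+ 2) =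
     p i * ((t * w i ^+ 2 + u i ^+ 2 / t) / 2) by field; rewrite gt_eqF.
  rewrite -mulrA ler_wpM2l //.
  rewrite ler_pdivlMr //; lra.
rewrite big_split /= -!mulr_sumr -/W -/U.
apply: (@le_trans _ _ (t / 2 * W + 1 / (2 * t) * e ^+ 2)).
  rewrite lerD2l ler_wpM2l // divr_ge0 // mulr_ge0 // ltW //.
rewrite -c2 /t.
have -> : e / c / 2 * c ^+ 2 + 1 / (2 * (e / c)) * e ^+ 2 = c * e by field; rewrite ?gt_eqF.
by [].
Qed.

Lemma sum3E (R : realType) (I1 I2 I3 : finType) (F : I1 -> I2 -> I3 -> R) :
  \sum_a \sum_b \sum_c F a b c = \sum_(q : I1 * (I2 * I3)) F q.1 q.2.1 q.2.2.
Proof.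
rewrite (eq_bigr (fun a => \sum_(q : I2 * I3) F a q.1 q.2)); last by move=> a _; rewrite pair_bigA.
by rewrite pair_bigA.
Qed.

Lemma CS3 (R : realType) (I1 I2 I3 : finType) (p w u : I1 -> I2 -> I3 -> R) (e : R) :
  (forall a b c, 0 <= p a b c) -> 0 <= e ->
  \sum_a \sum_b \sum_c p a b c * u a b c ^+ 2 <= e ^+ 2 ->
  `|\sum_a \sum_b \sum_c p a b c * w a b c * u a b c| <=
     Num.sqrt (\sum_a \sum_b \sum_c p a b c * w a b c ^+ 2) * e.
Proof.
move=> p0 e0; rewrite !sum3E => h.
exact: (@CS R _ (fun q => p q.1 q.2.1 q.2.2) (fun q => w q.1 q.2.1 q.2.2) (fun q => u q.1 q.2.1 q.2.2) e (fun q => p0 _ _ _) e0 h).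
Qed.

Section Ext.
Variables (A : finType) (j : nat).

Definition ext (x : actprefix A j) (b : A) : actprefix A j.+1 :=
  [ffun t : 'I_j.+1 => if (insub (nat_of_ord t) : option 'I_j) is Some t' then x t' else b].

Definition splt (a : actprefix A j.+1) : actprefix A j * A :=
  (restr a (@ord_max j), a ord_max).

Lemma ext_max x b : ext x b ord_max = b.
Proof. by rewrite ffunE insubF //= ltnn. Qed.

Lemma ext_restr x b : restr (ext x b) (@ord_max j) = x :> actprefix A j.
Proof.
apply/ffunP => t; rewrite !ffunE /=.
case: insubP => [t' _ ht'|]; last by rewrite /= ltn_ord.
by congr (x _); apply/val_inj; rewrite /= ht'.
Qed.

Lemma ext_splt a : ext (splt a).1 (splt a).2 = a.
Proof.
apply/ffunP => t; rewrite ffunE /=.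
case: insubP => [t' _ ht'|].
  by rewrite ffunE; congr (a _); apply/val_inj; rewrite /= ht'.
rewrite -ltnNge => h; congr (a _); apply/val_inj => /=.
by apply/eqP; rewrite eqn_leq -ltnS h -ltnS ltn_ord.
Qed.

Lemma splt_ext x b : splt (ext x b) = (x, b).
Proof. by rewrite /splt ext_restr ext_max. Qed.

Lemma sum_ext (R : realType) (F : actprefix A j.+1 -> R) :
  \sum_a F a = \sum_x \sum_b F (ext x b).
Proof.
rewrite pair_bigA /=.
rewrite (reindex (fun q : actprefix A j * A => ext q.1 q.2)) //=.
exists splt => [[x b] _|a _] /=; [exact: splt_ext | exact: ext_splt].
Qed.

Lemma prefix_ext (R : realType) (S : finType) (pol : seqpolicy R S A) s x b :
  prefix_law pol j.+1 s (ext x b) = prefix_law pol j s x * pol j s x b.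
Proof.
rewrite /prefix_law big_ord_recr /=.
congr (_ * _); last by rewrite ext_restr ext_max.
apply: eq_bigr => i _ /=.
have e1 : ext x b (widen_ord (leqnSn j) i) = x i.
  rewrite ffunE; case: insubP => [t' _ ht'|]; last by rewrite /= ltn_ord.
  by congr (x _); apply/val_inj; rewrite /= ht'.
have e2 : restr (ext x b) (widen_ord (leqnSn j) i) = restr x i :> actprefix A i.
  apply/ffunP => t; rewrite !ffunE; case: insubP => [t' _ ht'|].
    by congr (x _); apply/val_inj; rewrite /= ht'.
  by rewrite /= (ltn_trans (ltn_ord t) (ltn_ord i)).
by rewrite e1 e2.
Qed.
End Ext.
Arguments ext {A j} x b.
Arguments splt {A j} a.

Lemma bound_flat (R : realType) (I : finType) (sig w e1 e2 : I -> R) (beta eps xi : R) :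
  (forall i, 0 <= sig i) -> 0 < beta -> 0 <= eps -> 0 <= xi ->
  \sum_i sig i * e1 i ^+ 2 <= eps ^+ 2 -> \sum_i sig i * e2 i ^+ 2 <= xi ^+ 2 ->
  `|\sum_i sig i * w i * (e1 i + beta^-1 * e2 i)| <=
    Num.sqrt (\sum_i sig i * w i ^+ 2) * (eps + xi / beta).
Proof.
move=> s0 b0 ep0 xi0 h1 h2.
rewrite (eq_bigr (fun i => sig i * w i * e1 i + beta^-1 * (sig i * w i * e2 i))); last first.
  by move=> i _; ring.
rewrite big_split /= -mulr_sumr.
apply: (le_trans (ler_normD _ _)).
rewrite normrM (@gtr0_norm _ beta^-1) ?invr_gt0 //.
have c1 := @CS R I sig w e1 eps s0 ep0 h1.
have c2 := @CS R I sig w e2 xi s0 xi0 h2.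
rewrite mulrDr; apply: lerD => //.
have -> : Num.sqrt (\sum_i sig i * w i ^+ 2) * (xi / beta) =
  beta^-1 * (Num.sqrt (\sum_i sig i * w i ^+ 2) * xi) by ring.
by rewrite ler_wpM2l // invr_ge0 ltW.
Qed.

Lemma bound3 (R : realType) (I1 I2 I3 : finType) (sig w e1 e2 : I1 -> I2 -> I3 -> R) (beta eps xi : R) :
  (forall a b c, 0 <= sig a b c) -> 0 < beta -> 0 <= eps -> 0 <= xi ->
  \sum_a \sum_b \sum_c sig a b c * e1 a b c ^+ 2 <= eps ^+ 2 ->
  \sum_a \sum_b \sum_c sig a b c * e2 a b c ^+ 2 <= xi ^+ 2 ->
  `|\sum_a \sum_b \sum_c sig a b c * w a b c * (e1 a b c + beta^-1 * e2 a b c)| <=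
    Num.sqrt (\sum_a \sum_b \sum_c sig a b c * w a b c ^+ 2) * (eps + xi / beta).
Proof.
move=> s0 b0 ep0 xi0; rewrite !sum3E => h1 h2.
exact: (@bound_flat R _ (fun q => sig q.1 q.2.1 q.2.2) (fun q => w q.1 q.2.1 q.2.2)
  (fun q => e1 q.1 q.2.1 q.2.2) (fun q => e2 q.1 q.2.1 q.2.2) beta eps xi
  (fun q => s0 _ _ _) b0 ep0 xi0 h1 h2).
Qed.

Lemma Zpos (R : realType) (A : finType) (f : A -> R) (b : A) : 0 < \sum_c expR (f c).
Proof.
rewrite (bigD1 b) //=; apply: (lt_le_trans (expR_gt0 (f b))).
by rewrite lerDl sumr_ge0 // => c _; rewrite expR_ge0.
Qed.

Lemma softmax_ge0 (R : realType) (A : finType) (f : A -> R) b : 0 <= softmax f b.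
Proof. by rewrite /softmax divr_ge0 ?expR_ge0 // sumr_ge0 // => c _; rewrite expR_ge0. Qed.

Lemma softmax_sum1 (R : realType) (A : finType) (f : A -> R) (b0 : A) :
  \sum_b softmax f b = 1.
Proof.
rewrite /softmax -mulr_suml divff //; rewrite gt_eqF //. exact: (@Zpos R A f b0).
Qed.

Lemma ln_softmax (R : realType) (A : finType) (f g : A -> R) b :
  ln (softmax f b / softmax g b) =
    (f b - g b) + ln ((\sum_c expR (g c)) / \sum_c expR (f c)).
Proof.
have hf := @Zpos R A f b; have hg := @Zpos R A g b.
have -> : softmax f b / softmax g b =
   expR (f b - g b) * ((\sum_c expR (g c)) / \sum_c expR (f c)).
  rewrite /softmax expRB; field.
  by rewrite !gt_eqF ?expR_gt0.
by rewrite lnM ?posrE ?expR_gt0 ?divr_gt0 // expRK.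
Qed.

Lemma dotvB (R : realType) d (a v w : 'rV[R]_d) : dotv a (v - w) = dotv a v - dotv a w.
Proof.
rewrite /dotv -sumrB; apply: eq_bigr => i _; by rewrite !mxE mulrBr.
Qed.

Theorem lemma6 (R : realType) (S A : finType) (N d : nat)
  (P : S -> actprefix A N -> S -> R)
  (phi : forall j : nat, S -> actprefix A j -> A -> 'rV[R]_d)
  (hphi : forall j s (x : actprefix A j) b, dotv (phi j s x b) (phi j s x b) <= 1)
  (theta_k theta_k1 : nat -> 'rV[R]_d)
  (pistar : seqpolicy R S A) (hpistar : is_policy N pistar)
  (nu_k nu_star : S -> R)
  (hnu_k : stationary N P (loglin phi theta_k) nu_k)
  (hnu_star : stationary N P pistar nu_star)
  (j : nat) (hj : (j < N)%N)
  (hac0 : abs_cont nu_k (loglin phi theta_k) nu_star pistar j)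
  (hac1 : abs_cont nu_k (loglin phi theta_k) nu_star pistar j.+1)
  (beta : R) (hbeta : 0 < beta)
  (Q Qhat : S -> actprefix A j -> A -> R)
  (eps xi : R) (heps : 0 <= eps) (hxi : 0 <= xi)
  (h1 : sq_err nu_k (loglin phi theta_k) j (fun s x b =>
          dotv (phi j s x b) (theta_k1 j - theta_k j) - beta^-1 * Qhat s x b) <= eps ^+ 2)
  (h2 : sq_err nu_k (loglin phi theta_k) j (fun s x b => Qhat s x b - Q s x b) <= xi ^+ 2) :
  let pi_next : S -> actprefix A j -> A -> R := fun s x =>
    softmax (fun b => beta^-1 * Q s x b + dotv (phi j s x b) (theta_k j)) in
  let Delta := Num.sqrt 2 *
    (conc nu_k (loglin phi theta_k) nu_star pistar j.+1
     + conc nu_k (loglin phi theta_k) nu_star pistar j) * (eps + xi / beta) in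
  `| \sum_s \sum_(x : actprefix A j) joint_law nu_star pistar j s x *
       \sum_b ln (loglin phi theta_k1 j s x b / pi_next s x b)
              * (pistar j s x b - loglin phi theta_k j s x b) | <= Delta.
Proof.
cbv zeta.
pose pi_next := fun (s : S) (x : actprefix A j) =>
    softmax (fun b => beta^-1 * Q s x b + dotv (phi j s x b) (theta_k j)).
have [[nuk0 _] _] := hnu_k.
set pk := loglin phi theta_k.
have pk0 : forall s (x : actprefix A j) b, 0 <= pk j s x b by move=> *; exact: softmax_ge0.
have neA : forall (s : S) (x : actprefix A j), exists b0 : A, True.
  move=> s x; case: (pickP (fun _ : A => true)) => [b0 _|h]; first by exists b0.
  have [_ hs] := hpistar j hj s x.
  have : \sum_b pistar j s x b = 0 by rewrite big1 // => b _; move: (h b).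
  by rewrite hs => /eqP; rewrite oner_eq0.
have pl0 : forall s x, 0 <= prefix_law pk j s x.
  by move=> s x; apply: prodr_ge0 => i _; exact: softmax_ge0.
have sig0 : forall s x b, 0 <= sigma_law nu_k pk j s x b.
  move=> s x b; rewrite /sigma_law; apply: mulr_ge0; [apply: mulr_ge0|]; [exact: nuk0|exact: pl0|exact: pk0].
pose e1 := fun s x b => dotv (phi j s x b) (theta_k1 j - theta_k j) - beta^-1 * Qhat s x b.
pose e2 := fun s x b => Qhat s x b - Q s x b.
pose u := fun s x b => e1 s x b + beta^-1 * e2 s x b.
have inner : forall s x, \sum_b ln (loglin phi theta_k1 j s x b / pi_next s x b)
     * (pistar j s x b - pk j s x b) = \sum_b u s x b * (pistar j s x b - pk j s x b).
  move=> s x; have [b0 _] := neA s x.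
  have [_ hs] := hpistar j hj s x.
  have hk : \sum_b pk j s x b = 1 by exact: softmax_sum1.
  pose f := fun c => dotv (phi j s x c) (theta_k1 j).
  pose g := fun c => beta^-1 * Q s x c + dotv (phi j s x c) (theta_k j).
  rewrite (eq_bigr (fun b => u s x b * (pistar j s x b - pk j s x b) +
       ln ((\sum_c expR (g c)) / \sum_c expR (f c)) * (pistar j s x b - pk j s x b))); last first.
    move=> b _; rewrite /loglin /pi_next ln_softmax mulrDl; congr (_ + _); congr (_ * _).
    by rewrite /u /e1 /e2 /= dotvB; ring.
  by rewrite big_split /= -mulr_sumr sumrB hs hk subrr mulr0 addr0.
pose w0 := fun s (x : actprefix A j) (b : A) =>
  joint_law nu_star pistar j s x / joint_law nu_k pk j s x.
pose w1 := fun (s : S) (x : actprefix A j) (b : A) => joint_law nu_star pistar j.+1 s (ext x b) / joint_law nu_k pk j.+1 s (ext x b).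
pose sig := fun s x b => sigma_law nu_k pk j s x b.
have eqsplit : \sum_s \sum_(x : actprefix A j) joint_law nu_star pistar j s x *
       \sum_b ln (loglin phi theta_k1 j s x b / pi_next s x b)
              * (pistar j s x b - pk j s x b) =
   \sum_s \sum_x \sum_b sig s x b * w1 s x b * u s x b -
   \sum_s \sum_x \sum_b sig s x b * w0 s x b * u s x b.
  rewrite -sumrB; apply: eq_bigr => s _; rewrite -sumrB; apply: eq_bigr => x _.
  rewrite inner mulr_sumr -sumrB; apply: eq_bigr => b _.
  have t1 : joint_law nu_star pistar j s x * pistar j s x b * u s x b =
      sig s x b * w1 s x b * u s x b.
    have ha : joint_law nu_star pistar j s x * pistar j s x b =
       joint_law nu_star pistar j.+1 s (ext x b) by rewrite /joint_law prefix_ext mulrA.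
    have hb : sig s x b = joint_law nu_k pk j.+1 s (ext x b)
      by rewrite /sig /sigma_law /joint_law prefix_ext mulrA.
    rewrite ha hb /w1.
    case: (eqVneq (joint_law nu_k pk j.+1 s (ext x b)) 0) => h.
      by rewrite (hac1 s (ext x b) h) h !mul0r.
    by field.
  have t2 : joint_law nu_star pistar j s x * pk j s x b * u s x b =
      sig s x b * w0 s x b * u s x b.
    have hb : sig s x b = joint_law nu_k pk j s x * pk j s x b by [].
    rewrite hb /w0.
    case: (eqVneq (joint_law nu_k pk j s x) 0) => h.
      by rewrite (hac0 s x h) h !mul0r.
    by field.
  rewrite -t1 -t2; ring.
rewrite eqsplit; apply: le_trans (ler_normB _ _) _.
have b1 := @bound3 R S (actprefix A j) A sig w1 e1 e2 beta eps xi sig0 hbeta heps hxi h1 h2.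
have b0 := @bound3 R S (actprefix A j) A sig w0 e1 e2 beta eps xi sig0 hbeta heps hxi h1 h2.
apply: le_trans (lerD b1 b0) _.
have c1 : \sum_s \sum_x \sum_b sig s x b * w1 s x b ^+ 2 =
  \sum_s \sum_(a : actprefix A j.+1) joint_law nu_k pk j.+1 s a *
     (joint_law nu_star pistar j.+1 s a / joint_law nu_k pk j.+1 s a) ^+ 2.
  apply: eq_bigr => s _; rewrite sum_ext; apply: eq_bigr => x _; apply: eq_bigr => b _.
  by rewrite /sig /w1 /sigma_law /joint_law !prefix_ext !mulrA.
have c0 : \sum_s \sum_x \sum_b sig s x b * w0 s x b ^+ 2 =
  \sum_s \sum_(x : actprefix A j) joint_law nu_k pk j s x *
     (joint_law nu_star pistar j s x / joint_law nu_k pk j s x) ^+ 2.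
  apply: eq_bigr => s _; apply: eq_bigr => x _.
  have [b0' _] := neA s x.
  have hk : \sum_b pk j s x b = 1 by exact: softmax_sum1.
  rewrite -[RHS]mulr1 -hk mulr_sumr; apply: eq_bigr => b _.
  rewrite /sig /w0 /sigma_law /joint_law; ring.
rewrite c1 c0 /conc -/pk.
have s2 : 1 <= Num.sqrt (2 : R).
  have h : Num.sqrt 1 <= Num.sqrt (2 : R) by rewrite ler_sqrt; lra.
  by rewrite sqrtr1 in h.
have K0 : 0 <= eps + xi / beta by rewrite addr_ge0 // divr_ge0 // ltW.
rewrite -mulrDl ler_wpM2r // ler_peMl // addr_ge0 // sqrtr_ge0 //.
Qed.
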